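(* Let $\mathcal{H}_A$ have orthonormal basis $\ket{1},\ldots,\ket{N}$ and $\mathcal{H}_R$ be a finite-dimensional Hilbert space. Fix $i$ and a unitary $U$ on $\mathcal{H}_R$, and let $O_i$ be the unitary on $\mathcal{H}_A\otimes\mathcal{H}_R$ with $O_i\ket{i}\otimes\ket{w}=\ket{i}\otimes\ket{Uw}$ and $O_i\ket{j}\otimes\ket{w}=\ket{j}\otimes\ket{w}$ for $j\neq i$; assume $O_i$ is self-adjoint. For $p\in[0,1]$ let $\mathcal{F}_i^p(\rho)=(1-p)\rho+p\,O_i\rho O_i^\dagger$, and let $P_i=\ket{i}\bra{i}\otimes\mathrm{Id}$. Let $0<\eta<1$. Then for all density matrices $\rho,\sigma$ on $\mathcal{H}_A\otimes\mathcal{H}_R$ and all $p,q\in[\eta,1-\eta]$, $$\sqrt{F}(\mathcal{F}_i^p(\rho),\mathcal{F}_i^q(\sigma))\geq\sqrt{F}(\rho,\sigma)-\frac{(p-q)^2}{\eta(1-\eta)}\sqrt{\mathrm{tr}(P_i\rho)\,\mathrm{tr}(P_i\sigma)}.$$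
   Context: For density matrices $\rho,\sigma$ the (root) fidelity is $\sqrt{F}(\rho,\sigma)=\mathrm{tr}\sqrt{\rho^{1/2}\sigma\rho^{1/2}}$. *)

(* Defs.v *)
From HB Require Import structures.
From mathcomp Require Import all_boot all_order all_algebra.
From mathcomp Require Import sesquilinear spectral complex mxtens.
From mathcomp Require Import boolp classical_sets reals.
Set Implicit Arguments. Unset Strict Implicit. Unset Printing Implicit Defensive.
Import Order.TTheory GRing.Theory Num.Theory.
Local Open Scope ring_scope.
Local Open Scope sesquilinear_scope.

Definition adjmx (R : realType) m n (A : 'M[R[i]]_(m, n)) : 'M[R[i]]_(n, m) :=
  A ^t*.

Definition psdmx (R : realType) n (A : 'M[R[i]]_n) : Prop :=
  A \is hermsymmx /\ forall v : 'cV[R[i]]_n, 0 <= (v ^t* *m A *m v) 0 0.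

Definition density (R : realType) n (rho : 'M[R[i]]_n) : Prop :=
  psdmx rho /\ \tr rho = 1.

(* The positive semidefinite square root A^{1/2} of a PSD matrix A:
   a PSD matrix B with B B = A (unique when A is PSD), chosen by
   classical choice; 0 if no such B exists (never happens for PSD A). *)
Definition msqrt (R : realType) n (A : 'M[R[i]]_n) : 'M[R[i]]_n :=
  xget 0 [set B : 'M[R[i]]_n | psdmx B /\ B *m B = A].

Definition root_fid (R : realType) n (rho sigma : 'M[R[i]]_n) : R[i] :=
  \tr (msqrt (msqrt rho *m sigma *m msqrt rho)).

(* Main.v *)
Require Import Defs.
From HB Require Import structures.
From mathcomp Require Import all_boot all_order all_algebra.
From mathcomp Require Import sesquilinear spectral complex mxtens.
From mathcomp Require Import boolp classical_sets reals.
From mathcomp Require Import ring lra.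
Import Order.TTheory GRing.Theory Num.Theory.
Local Open Scope ring_scope.
Set Warnings "-notation-overridden,-ambiguous-paths".
Set Implicit Arguments. Unset Strict Implicit. Unset Printing Implicit Defensive.

Section Basics.
Variable R : realType.
Local Notation C := (R[i]).
Local Open Scope sesquilinear_scope.

Lemma adjM m n p (A : 'M[C]_(m, n)) (B : 'M[C]_(n, p)) :
  (A *m B)^t* = B^t* *m A^t*.
Proof. by rewrite trmx_mul map_mxM. Qed.

Lemma adjK m n (A : 'M[C]_(m, n)) : A^t*^t* = A.
Proof. exact: trmxCK. Qed.

Lemma adjD m n (A B : 'M[C]_(m, n)) : (A + B)^t* = A^t* + B^t*.
Proof. by rewrite linearD /= map_mxD. Qed.

Lemma adjN m n (A : 'M[C]_(m, n)) : (- A)^t* = - A^t*.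
Proof. by rewrite linearN /= map_mxN. Qed.

Lemma adjB m n (A B : 'M[C]_(m, n)) : (A - B)^t* = A^t* - B^t*.
Proof. by rewrite adjD adjN. Qed.

Lemma adjZ m n (a : C) (A : 'M[C]_(m, n)) : (a *: A)^t* = a^* *: A^t*.
Proof. by rewrite linearZ /= map_mxZ. Qed.

Lemma adj1 n : (1%:M : 'M[C]_n)^t* = 1%:M.
Proof. by rewrite trmx1 map_mx1. Qed.

Lemma adj0 m n : (0 : 'M[C]_(m, n))^t* = 0.
Proof. by rewrite trmx0 map_mx0. Qed.

Lemma tr_adj n (A : 'M[C]_n) : \tr (A^t*) = (\tr A)^*.
Proof. by rewrite /mxtrace rmorph_sum; apply: eq_bigr => i _; rewrite !mxE. Qed.

Definition frob m n (A : 'M[C]_(m, n)) := \tr (A^t* *m A).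

Lemma frobE m n (A : 'M[C]_(m, n)) :
  frob A = \sum_i \sum_j A j i * (A j i)^*.
Proof.
rewrite /frob /mxtrace; apply: eq_bigr => i _; rewrite !mxE.
by apply: eq_bigr => j _; rewrite !mxE mulrC.
Qed.

Lemma frob_ge0 m n (A : 'M[C]_(m, n)) : 0 <= frob A.
Proof.
by rewrite frobE; apply: sumr_ge0 => i _; apply: sumr_ge0 => j _; apply: mul_conjC_ge0.
Qed.

Lemma frob_eq0 m n (A : 'M[C]_(m, n)) : frob A = 0 -> A = 0.
Proof.
rewrite frobE => H; apply/matrixP => j i; rewrite mxE.
have H1 := psumr_eq0P (fun i _ => sumr_ge0 _ (fun j _ => mul_conjC_ge0 (A j i))) H.
have H2 := psumr_eq0P (fun j _ => mul_conjC_ge0 (A j i)) (H1 i isT) (i:=j) isT.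
by apply/eqP; rewrite -mul_conjC_eq0 H2.
Qed.

Lemma frob_adj m n (A : 'M[C]_(m, n)) : frob (A^t*) = \tr (A *m A^t*).
Proof. by rewrite /frob adjK. Qed.

Lemma frobC m n (A : 'M[C]_(m, n)) : frob A = \tr (A *m A^t*).
Proof. by rewrite /frob mxtrace_mulC. Qed.

Lemma real_ge0 (x : C) : 0 <= x -> x^* = x.
Proof. by move=> x0; apply: conj_Creal; apply: ger0_real. Qed.

Lemma tr_adjM m n (A B : 'M[C]_(m, n)) : \tr (B^t* *m A) = (\tr (A^t* *m B))^*.
Proof. by rewrite -tr_adj adjM adjK. Qed.

Lemma mxtraceN n (A : 'M[C]_n) : \tr (- A) = - \tr A.
Proof. by rewrite /mxtrace -sumrN; apply: eq_bigr => j _; rewrite mxE. Qed.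

Lemma mxtraceB n (A B : 'M[C]_n) : \tr (A - B) = \tr A - \tr B.
Proof. by rewrite mxtraceD mxtraceN. Qed.

Lemma frobCS m n (A B : 'M[C]_(m, n)) :
  `|\tr (A^t* *m B)| ^+ 2 <= frob A * frob B.
Proof.
have a0 : 0 <= frob A := frob_ge0 A.
have b0 : 0 <= frob B := frob_ge0 B.
have [aE|anz] := eqVneq (frob A) 0.
  rewrite aE mul0r; have -> : A = 0 by apply: frob_eq0.
  by rewrite adj0 mul0mx mxtrace0 normr0 expr0n.
have apos : 0 < frob A by rewrite lt_def anz a0.
have zc : \tr (B^t* *m A) = (\tr (A^t* *m B))^* by rewrite tr_adjM.
have := frob_ge0 (frob A *: B - \tr (A^t* *m B) *: A).
have -> : frob (frob A *: B - \tr (A^t* *m B) *: A) =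
   frob A * (frob A * frob B - `|\tr (A^t* *m B)| ^+ 2).
  rewrite {1}/frob adjB !adjZ (real_ge0 a0) mulmxBl !mulmxBr.
  rewrite !mxtraceB.
  rewrite -!scalemxAl -!scalemxAr normCK.
  have e1 : \tr (A^t* *m A) = frob A by [].
  have e2 : \tr (B^t* *m B) = frob B by [].
  move: zc e1 e2.
  move: (A^t* *m A) (B^t* *m B) (A^t* *m B) (B^t* *m A) => M1 M2 M3 M4 zc e1 e2.
  rewrite !mxtraceZ zc ?e1 ?e2.
  ring.
by rewrite pmulr_rge0 // subr_ge0.
Qed.

End Basics.

Section Fmx.
Variable R : realType.
Local Notation C := (R[i]).
Local Open Scope sesquilinear_scope.

Lemma hermP n (A : 'M[C]_n) : A \is hermsymmx -> A^t* = A.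
Proof. by move/is_hermitianmxP; rewrite expr0 scale1r => <-. Qed.

Lemma hermI n (A : 'M[C]_n) : A^t* = A -> A \is hermsymmx.
Proof. by move=> H; apply/is_hermitianmxP; rewrite expr0 scale1r H. Qed.

Lemma conj_mul n (Q Qt D1 D2 : 'M[C]_n) : Q *m Qt = 1%:M ->
  Qt *m D1 *m Q *m (Qt *m D2 *m Q) = Qt *m (D1 *m D2) *m Q.
Proof. by move=> QQ; rewrite !mulmxA -(mulmxA (Qt *m D1) Q Qt) QQ mulmx1. Qed.

Section OneMx.
Variables (n : nat) (A : 'M[C]_n).
Hypothesis HA : A \is hermsymmx.
Local Notation Q := (spectralmx A).
Local Notation d := (spectral_diag A).

Definition fmx (f : C -> C) : 'M[C]_n :=
  Q^t* *m diag_mx (\row_j f (d 0 j)) *m Q.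

Lemma QQt : Q *m Q^t* = 1%:M.
Proof. exact/unitarymxP/spectral_unitarymx. Qed.

Lemma QtQ : Q^t* *m Q = 1%:M.
Proof. exact/mulmx1C/QQt. Qed.

Lemma A_decomp : A = Q^t* *m diag_mx d *m Q.
Proof.
have := hermitian_normalmx HA => /orthomx_spectralP {1}->.
by rewrite invmx_unitary // spectral_unitarymx.
Qed.

Lemma d_real j : d 0 j \is Num.real.
Proof. by have /mxOverP := hermitian_spectral_diag_real HA; apply. Qed.

Lemma fmx_id : fmx id = A.
Proof.
have E : \row_j id (d 0 j) = d by apply/rowP => j; rewrite mxE.
by rewrite /fmx E -A_decomp.
Qed.

Lemma fmx_idE : fmx (fun x => x) = A.
Proof. exact: fmx_id. Qed.

Lemma fmxM f g : fmx f *m fmx g = fmx (fun x => f x * g x).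
Proof.
have E : diag_mx (\row_j f (d 0 j)) *m diag_mx (\row_j g (d 0 j)) =
         diag_mx (\row_j (f (d 0 j) * g (d 0 j))).
  by rewrite mulmx_diag; apply/matrixP => a b; rewrite !mxE.
by rewrite /fmx conj_mul ?QQt // E.
Qed.

Lemma fmx_adj f : (fmx f)^t* = fmx (fun x => (f x)^*).
Proof.
have E : (diag_mx (\row_j f (d 0 j)))^t* = diag_mx (\row_j (f (d 0 j))^*).
  by rewrite tr_diag_mx map_diag_mx; apply/matrixP => a b; rewrite !mxE.
by rewrite /fmx !adjM adjK E mulmxA.
Qed.

Lemma fmx_eq f g : (forall j, f (d 0 j) = g (d 0 j)) -> fmx f = fmx g.
Proof.
move=> H.
have E : \row_j f (d 0 j) = \row_j g (d 0 j) by apply/rowP => j; rewrite !mxE H.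
by rewrite /fmx E.
Qed.

Lemma fmx1 : fmx (fun=> 1) = 1%:M.
Proof.
have E : diag_mx (\row_j (fun=> (1 : C)) (d 0 j)) = 1%:M.
  by apply/matrixP => i j; rewrite !mxE.
by rewrite /fmx E mulmx1 QtQ.
Qed.

Lemma fmxB f g : fmx (fun x => f x - g x) = fmx f - fmx g.
Proof.
have E : diag_mx (\row_j (f (d 0 j) - g (d 0 j))) =
         diag_mx (\row_j f (d 0 j)) - diag_mx (\row_j g (d 0 j)).
  by apply/matrixP => i j; rewrite !mxE; case: (i == j); rewrite ?mulr1n ?mulr0n ?subr0.
by rewrite /fmx E mulmxBr mulmxBl.
Qed.

End OneMx.

Definition pinv n (A : 'M[C]_n) := fmx A (fun x => x^-1).
Definition proj n (A : 'M[C]_n) := fmx A (fun x => x * x^-1).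
Definition hsqrt n (A : 'M[C]_n) := fmx A sqrtC.

Section Herm.
Variables (n : nat) (S : 'M[C]_n).
Hypothesis HS : S \is hermsymmx.

Lemma S_pinv : S *m pinv S = proj S.
Proof. by rewrite -{1}(fmx_id HS) fmxM. Qed.

Lemma pinv_S : pinv S *m S = proj S.
Proof. by rewrite -{2}(fmx_id HS) fmxM; apply: fmx_eq => j; rewrite mulrC. Qed.

Lemma xVx (x : C) : x * x^-1 * x = x.
Proof. by have [->|nz] := eqVneq x 0; rewrite ?mulr0 ?mul0r // divfK. Qed.

Lemma xVV (x : C) : x * x^-1 * x^-1 = x^-1.
Proof. by have [->|nz] := eqVneq x 0; rewrite ?invr0 ?mulr0 ?mul0r // divff // mul1r. Qed.

Lemma proj_S : proj S *m S = S.
Proof.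
by rewrite -{2 3}(fmx_id HS) fmxM; apply: fmx_eq => j; rewrite xVx.
Qed.

Lemma S_proj : S *m proj S = S.
Proof.
by rewrite -{1 3}(fmx_id HS) fmxM; apply: fmx_eq => j; rewrite mulrC xVx.
Qed.

Lemma proj_pinv : proj S *m pinv S = pinv S.
Proof. by rewrite /proj /pinv fmxM; apply: fmx_eq => j; rewrite xVV. Qed.

Lemma proj_proj : proj S *m proj S = proj S.
Proof.
rewrite /proj fmxM; apply: fmx_eq => j.
by rewrite mulrA xVx.
Qed.

Lemma proj_adj : (proj S)^t* = proj S.
Proof.
rewrite /proj fmx_adj; apply: fmx_eq => j.
by rewrite conj_Creal // rpredM ?rpredV // d_real.
Qed.

Lemma pinv_adj : (pinv S)^t* = pinv S.
Proof.
rewrite /pinv fmx_adj; apply: fmx_eq => j.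
by rewrite conj_Creal // rpredV // d_real.
Qed.

Lemma range_lemma k (X : 'M[C]_(n, k)) :
  X *m X^t* = S *m S -> proj S *m X = X.
Proof.
move=> HX.
pose E := 1%:M - proj S.
have ES : E *m S = 0 by rewrite /E mulmxBl mul1mx proj_S subrr.
have EA : E^t* = E by rewrite /E adjB adj1 proj_adj.
have : frob ((E *m X)^t*) = 0.
  rewrite frob_adj adjM EA mulmxA -(mulmxA E) HX mulmxA ES !mul0mx.
  by rewrite mxtrace0.
move/frob_eq0 => H0.
have : E *m X = 0 by rewrite -[E *m X]adjK H0 adj0.
by rewrite /E mulmxBl mul1mx => /eqP; rewrite subr_eq0 => /eqP.
Qed.

End Herm.

Lemma psd_herm n (A : 'M[C]_n) : psdmx A -> A \is hermsymmx.
Proof. by case. Qed.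

Lemma psd_d_ge0 n (A : 'M[C]_n) (PA : psdmx A) j : 0 <= spectral_diag A 0 j.
Proof.
have HA := psd_herm PA.
pose v := (spectralmx A)^t* *m delta_mx j (0 : 'I_1).
have := PA.2 v.
have -> : (v^t* *m A *m v) = delta_mx 0 j *m diag_mx (spectral_diag A) *m delta_mx j 0.
  rewrite /v !adjM adjK {2}(A_decomp HA).
  have -> : (delta_mx j (0 : 'I_1))^t* = delta_mx 0 j :> 'M[C]_(1, n).
    by apply/matrixP => a b; rewrite !mxE rmorph_nat andbC.
  have QQ := QQt A; set Q := spectralmx A in QQ *.
  rewrite !mulmxA -(mulmxA (delta_mx 0 j) Q) QQ mulmx1.
  by rewrite -(mulmxA (_ *m _) Q) QQ mulmx1.
by rewrite -rowE -colE !mxE eqxx mulr1n.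
Qed.

Lemma gram_psd n k (G : 'M[C]_(n, k)) : psdmx (G *m G^t*).
Proof.
split; first by apply: hermI; rewrite adjM adjK.
move=> v; rewrite -trace_mx11.
have -> : v^t* *m (G *m G^t*) *m v = (G^t* *m v)^t* *m (G^t* *m v).
  by rewrite adjM adjK !mulmxA.
exact: frob_ge0.
Qed.

Section Psd.
Variables (n : nat) (T : 'M[C]_n).
Hypothesis PT : psdmx T.

Lemma hsqrt_adj : (hsqrt T)^t* = hsqrt T.
Proof.
have HT := psd_herm PT.
rewrite /hsqrt fmx_adj; apply: fmx_eq => j.
by apply: real_ge0; rewrite sqrtC_ge0 psd_d_ge0.
Qed.

Lemma hsqrt_sq : hsqrt T *m hsqrt T = T.
Proof.
have HT := psd_herm PT.
rewrite /hsqrt fmxM -[RHS](fmx_id HT); apply: fmx_eq => j.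
by rewrite -expr2 sqrtCK.
Qed.

Lemma psd_tr k (G : 'M[C]_(n, k)) : 0 <= \tr (G^t* *m T *m G).
Proof.
rewrite -hsqrt_sq -{1}hsqrt_adj.
have -> : G^t* *m ((hsqrt T)^t* *m hsqrt T) *m G =
          (hsqrt T *m G)^t* *m (hsqrt T *m G) by rewrite adjM !mulmxA.
exact: frob_ge0.
Qed.

Lemma msqrt_spec : psdmx (msqrt T) /\ msqrt T *m msqrt T = T.
Proof.
have HT := psd_herm PT.
rewrite /msqrt; apply: (@xgetPex _ 0 [set B | psdmx B /\ B *m B = T]).
pose G := fmx T (fun x => sqrtC (sqrtC x)).
have GA : G^t* = G.
  rewrite /G fmx_adj; apply: fmx_eq => j.
  by apply: real_ge0; rewrite !sqrtC_ge0 psd_d_ge0.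
exists (G *m G^t*); split; first exact: gram_psd.
rewrite GA /G !fmxM -[RHS](fmx_id HT); apply: fmx_eq => j.
by rewrite -!expr2 !sqrtCK.
Qed.

End Psd.

End Fmx.
Set Implicit Arguments. Unset Strict Implicit. Unset Printing Implicit Defensive.

Section Fid.
Variable R : realType.
Local Notation C := (R[i]).
Local Open Scope sesquilinear_scope.
Variable n : nat.

Lemma one_minus_proj (S : 'M[C]_n) : S \is hermsymmx ->
  (1%:M - proj S) *m (1%:M - proj S)^t* = 1%:M - proj S.
Proof.
move=> HS; rewrite adjB adj1 (proj_adj HS) mulmxBl !mulmxBr !mul1mx mulmx1.
by rewrite proj_proj subrr subr0.
Qed.

Lemma sum3_lemma (a p : 'M[C]_n) : a + (1%:M - p) + (p - a) = 1%:M.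
Proof. by rewrite addrC addrA subrK addrC subrK. Qed.

Lemma tr_contract k (T : 'M[C]_n) (M : 'M[C]_(n, k)) (N1 N2 : 'M[C]_n) :
  psdmx T -> M *m M^t* + N1 *m N1^t* + N2 *m N2^t* = 1%:M ->
  \tr (M^t* *m T *m M) <= \tr T.
Proof.
move=> PT H.
have -> : \tr T = \tr (M^t* *m T *m M) + \tr (N1^t* *m T *m N1) + \tr (N2^t* *m T *m N2).
  rewrite -[in LHS](mulmx1 T) -H !mulmxDr !mxtraceD.
  by rewrite !mulmxA ![\tr (_ *m _^t* )]mxtrace_mulC !mulmxA.
by rewrite -addrA lerDl addr_ge0 // psd_tr.
Qed.

Lemma fid_ub k (X Y : 'M[C]_(n, k)) :
  `|\tr (X^t* *m Y)| <= root_fid (X *m X^t*) (Y *m Y^t*).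
Proof.
have Prho := gram_psd X; have Psig := gram_psd Y.
rewrite /root_fid.
move: (msqrt_spec Prho) (msqrt_spec Psig).
move: (msqrt (X *m X^t*)) (msqrt (Y *m Y^t*)) => S Rm [PS SS] [PR RR].
have HS := psd_herm PS; have HR := psd_herm PR.
have HSa := hermP HS; have HRa := hermP HR.
have A0E : S *m (Y *m Y^t*) *m S = (S *m Rm) *m (S *m Rm)^t*.
  by rewrite adjM HSa HRa -RR !mulmxA.
have PA0 : psdmx (S *m (Y *m Y^t*) *m S) by rewrite A0E; apply: gram_psd.
move: (msqrt_spec PA0); move: (msqrt _) => T [PT TT].
have HT := psd_herm PT.
have HX : proj S *m X = X by apply: (range_lemma HS).
have HY : proj Rm *m Y = Y by apply: (range_lemma HR).
pose V := pinv S *m X; pose W := pinv Rm *m Y.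
have XV : X = S *m V by rewrite /V mulmxA (S_pinv HS) HX.
have YW : Y = Rm *m W by rewrite /W mulmxA (S_pinv HR) HY.
have VV : V *m V^t* = proj S.
  rewrite /V adjM (pinv_adj HS) mulmxA -(mulmxA _ X) -SS mulmxA (pinv_S HS).
  by rewrite -mulmxA (S_pinv HS) proj_proj.
have WW : W *m W^t* = proj Rm.
  rewrite /W adjM (pinv_adj HR) mulmxA -(mulmxA _ Y) -RR mulmxA (pinv_S HR).
  by rewrite -mulmxA (S_pinv HR) proj_proj.
clearbody V W.
pose Z := S *m Rm.
have ZZ : Z *m Z^t* = T *m T by rewrite TT A0E.
have HZ : proj T *m Z = Z by apply: (range_lemma HT).
have ZE : S *m Rm = Z by [].
clearbody Z.
pose J := pinv T *m Z.
have ZJ : Z = T *m J by rewrite /J mulmxA (S_pinv HT) HZ.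
have JJ : J *m J^t* = proj T.
  rewrite /J adjM (pinv_adj HT) mulmxA -(mulmxA _ Z) ZZ mulmxA (pinv_S HT).
  by rewrite -mulmxA (S_pinv HT) proj_proj.
clearbody J.
pose H := hsqrt T.
have HH : H *m H = T by apply: hsqrt_sq.
have Ha : H^t* = H by apply: hsqrt_adj.
clearbody H.
have trE : \tr (X^t* *m Y) = \tr ((H *m V)^t* *m (H *m J *m W)).
  rewrite XV YW (adjM S V) HSa (adjM H V) Ha.
  rewrite -(mulmxA (V^t*)) (mulmxA S) ZE ZJ -HH.
  by rewrite !mulmxA.
have trT0 : 0 <= \tr T.
  by have := psd_tr PT 1%:M; rewrite adj1 mul1mx mulmx1.
have B1 : frob (H *m V) <= \tr T.
  rewrite /frob adjM Ha mulmxA -(mulmxA (V^t*) H H) HH.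
  apply: (@tr_contract k T V (1%:M - proj S) 0 PT).
  by rewrite VV (one_minus_proj HS) mul0mx addr0 addrC subrK.
have B2 : frob (H *m J *m W) <= \tr T.
  rewrite -(mulmxA H J W) /frob (adjM H (J *m W)) Ha (mulmxA _ H (J *m W)) -(mulmxA _ H H) HH.
  apply: (@tr_contract k T (J *m W) (1%:M - proj T) (J *m (1%:M - proj Rm)) PT).
  rewrite (adjM J W) mulmxA -(mulmxA J W (W^t*)) WW.
  rewrite (one_minus_proj HT).
  rewrite (adjM J) (mulmxA (J *m (1%:M - proj Rm))) -(mulmxA J (1%:M - proj Rm)) (one_minus_proj HR).
  rewrite mulmxBr mulmx1 mulmxBl JJ.
  exact: sum3_lemma.
have CS := frobCS (H *m V) (H *m J *m W).
rewrite trE.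
rewrite -(@ler_pXn2r _ 2%N) // ?nnegrE ?normr_ge0 //.
apply: (le_trans CS); rewrite expr2.
by apply: ler_pM => //; apply: frob_ge0.
Qed.

End Fid.
Set Implicit Arguments. Unset Strict Implicit. Unset Printing Implicit Defensive.

Section Ach.
Variable R : realType.
Local Notation C := (R[i]).
Local Open Scope sesquilinear_scope.
Variable n : nat.

Lemma adj_row m n1 n2 (A : 'M[C]_(m, n1)) (B : 'M[C]_(m, n2)) :
  (row_mx A B)^t* = col_mx (A^t*) (B^t*).
Proof. by rewrite tr_row_mx map_col_mx. Qed.

Lemma fid_ach (rho sigma : 'M[C]_n) : psdmx rho -> psdmx sigma ->
  exists X Y : 'M[C]_(n, n + n),
    [/\ X *m X^t* = rho, Y *m Y^t* = sigma & \tr (X^t* *m Y) = root_fid rho sigma].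
Proof.
move=> Pr Ps; rewrite /root_fid.
move: (msqrt_spec Pr) (msqrt_spec Ps).
move: (msqrt rho) (msqrt sigma) => S Rm [PS SS] [PR RR].
have HS := psd_herm PS; have HR := psd_herm PR.
have HSa := hermP HS; have HRa := hermP HR.
have A0E : S *m sigma *m S = (S *m Rm) *m (S *m Rm)^t*.
  by rewrite adjM HSa HRa -RR !mulmxA.
have PA0 : psdmx (S *m sigma *m S) by rewrite A0E; apply: gram_psd.
move: (msqrt_spec PA0); move: (msqrt _) => T [PT TT].
have HT := psd_herm PT.
pose Z := S *m Rm.
have ZE : S *m Rm = Z by [].
have ZZ : Z *m Z^t* = T *m T by rewrite TT A0E ZE.
have HZ : proj T *m Z = Z by apply: (range_lemma HT).
clearbody Z.
pose J := pinv T *m Z.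
have ZJ : Z = T *m J by rewrite /J mulmxA (S_pinv HT) HZ.
have JJ : J *m J^t* = proj T.
  rewrite /J adjM (pinv_adj HT) mulmxA -(mulmxA _ Z) ZZ mulmxA (pinv_S HT).
  by rewrite -mulmxA (S_pinv HT) proj_proj.
have PJ : proj T *m J = J by rewrite /J mulmxA proj_pinv.
clearbody J.
pose E := 1%:M - J^t* *m J.
have Ea : E^t* = E by rewrite /E adjB adj1 adjM adjK.
have EE : E *m E^t* = E.
  rewrite Ea /E mulmxBl mul1mx mulmxBr mulmx1.
  rewrite (mulmxA (J^t* *m J)) -(mulmxA (J^t*) J (J^t*)) JJ.
  by rewrite -(mulmxA (J^t*) (proj T) J) PJ subrr subr0.
have EJ : J^t* *m J + E = 1%:M by rewrite /E addrC subrK.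
clearbody E.
exists (row_mx S 0), (row_mx (Rm *m J^t*) (Rm *m E)); split.
- by rewrite adj_row mul_row_col HSa mul0mx addr0 SS.
- rewrite adj_row mul_row_col (adjM Rm (J^t*)) (adjM Rm E) adjK HRa.
  have -> : Rm *m J^t* *m (J *m Rm) + Rm *m E *m (E^t* *m Rm) =
            Rm *m (J^t* *m J + E *m E^t*) *m Rm.
    by rewrite mulmxDr mulmxDl !mulmxA.
  by rewrite EE EJ mulmx1 RR.
- rewrite mxtrace_mulC adj_row mul_row_col adj0 mulmx0 addr0 HSa.
  rewrite mxtrace_mulC mulmxA ZE ZJ -mulmxA JJ.
  by rewrite (S_proj HT).
Qed.

End Ach.
Set Implicit Arguments. Unset Strict Implicit. Unset Printing Implicit Defensive.

Section Tens.
Variable R : realType.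
Local Notation C := (R[i]).
Local Open Scope sesquilinear_scope.

Lemma tensmxDl m1 n1 m2 n2 (A B : 'M[C]_(m1, n1)) (E : 'M[C]_(m2, n2)) :
  (A + B) *t E = A *t E + B *t E.
Proof. by apply/matrixP => r c; rewrite !mxE mulrDl. Qed.

Lemma tensmxNl m1 n1 m2 n2 (A : 'M[C]_(m1, n1)) (E : 'M[C]_(m2, n2)) :
  (- A) *t E = - (A *t E).
Proof. by apply/matrixP => r c; rewrite !mxE mulNr. Qed.

Lemma tensmxDr m1 n1 m2 n2 (A : 'M[C]_(m1, n1)) (E F : 'M[C]_(m2, n2)) :
  A *t (E + F) = A *t E + A *t F.
Proof. by apply/matrixP => r c; rewrite !mxE mulrDr. Qed.

Lemma tensmxNr m1 n1 m2 n2 (A : 'M[C]_(m1, n1)) (E : 'M[C]_(m2, n2)) :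
  A *t (- E) = - (A *t E).
Proof. by apply/matrixP => r c; rewrite !mxE mulrN. Qed.

Lemma tensmxBl m1 n1 m2 n2 (A B : 'M[C]_(m1, n1)) (E : 'M[C]_(m2, n2)) :
  (A - B) *t E = A *t E - B *t E.
Proof. by rewrite tensmxDl tensmxNl. Qed.

Lemma tensmxBr m1 n1 m2 n2 (A : 'M[C]_(m1, n1)) (E F : 'M[C]_(m2, n2)) :
  A *t (E - F) = A *t E - A *t F.
Proof. by rewrite tensmxDr tensmxNr. Qed.

Lemma adj_tens m1 n1 m2 n2 (A : 'M[C]_(m1, n1)) (E : 'M[C]_(m2, n2)) :
  (A *t E)^t* = A^t* *t E^t*.
Proof. by rewrite trmx_tens map_mxT. Qed.

Lemma tens11 m1 m2 : (1%:M : 'M[C]_m1) *t (1%:M : 'M[C]_m2) = 1%:M.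
Proof.
apply/matrixP => r c.
case: (mxtens_indexP r) => a b; case: (mxtens_indexP c) => a' b'.
rewrite tensmxE !mxE (inj_eq (can_inj (@mxtens_indexK _ _))) xpair_eqE.
by case: (a == a'); case: (b == b'); rewrite ?mulr1 ?mulr0.
Qed.

Lemma delta_adj m (j : 'I_m) : (delta_mx j j : 'M[C]_m)^t* = delta_mx j j.
Proof. by apply/matrixP => a b; rewrite !mxE rmorph_nat andbC. Qed.

Lemma tens_delta m1 m2 (j : 'I_m1) (a : 'I_m2) :
  (delta_mx j (0 : 'I_1) : 'M[C]_(m1, 1)) *t (delta_mx a (0 : 'I_1) : 'M[C]_(m2, 1))
  = delta_mx (mxtens_index (j, a)) (mxtens_index ((0 : 'I_1), (0 : 'I_1))).
Proof.
apply/matrixP => r c.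
case: (mxtens_indexP r) => x y; case: (mxtens_indexP c) => z t.
rewrite tensmxE !mxE !(inj_eq (can_inj (@mxtens_indexK _ _))) !xpair_eqE.
by case: (x == j); case: (y == a); case: (z == 0); case: (t == 0); rewrite ?mulr1 ?mulr0.
Qed.

Lemma mul_delta_entry m1 m2 (X : 'M[C]_(m1, m2)) (r : 'I_m1) (k : 'I_m2) (c : 'I_1) :
  (X *m delta_mx k c) r c = X r k.
Proof.
rewrite mxE (bigD1 k) //= !mxE !eqxx mulr1 big1 ?addr0 // => x /negbTE nx.
by rewrite !mxE nx mulr0.
Qed.

Lemma mx_eq_basis m1 m2 (A B : 'M[C]_(m1 * m2)) :
  (forall j a, A *m ((delta_mx j (0 : 'I_1)) *t (delta_mx a (0 : 'I_1)))
             = B *m ((delta_mx j (0 : 'I_1)) *t (delta_mx a (0 : 'I_1)))) -> A = B.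
Proof.
move=> H; apply/matrixP => r k.
case: (mxtens_indexP k) => j a.
have := congr1 (fun X : 'M[C]_(m1 * m2, 1 * 1) => X r (mxtens_index ((0 : 'I_1), (0 : 'I_1)))) (H j a).
by rewrite tens_delta !mul_delta_entry.
Qed.

End Tens.
Set Implicit Arguments. Unset Strict Implicit. Unset Printing Implicit Defensive.

Lemma zm1 (V : zmodType) (a b c : V) : a + (b - c) - b = a - c.
Proof. by rewrite (addrC b) addrA addrK. Qed.

Section Oracle.
Variable R : realType.
Local Notation C := (R[i]).
Local Open Scope sesquilinear_scope.
Variables (N M : nat) (i : 'I_N) (U : 'M[C]_M) (O : 'M[C]_(N * M)).
Hypothesis HU : U \is unitarymx.
Hypothesis H1 : forall w : 'cV[C]_M,
      O *m (delta_mx i (0 : 'I_1) *t w) = delta_mx i (0 : 'I_1) *t (U *m w).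
Hypothesis H2 : forall (j : 'I_N) (w : 'cV[C]_M), j != i ->
      O *m (delta_mx j (0 : 'I_1) *t w) = delta_mx j (0 : 'I_1) *t w.

Local Notation D := (delta_mx i i : 'M[C]_N).

Lemma O_form : O = D *t U + (1%:M - D) *t 1%:M.
Proof.
apply: mx_eq_basis => j a.
rewrite mulmxDl !tensmx_mul mul1mx.
have [->|ne] := eqVneq j i.
  rewrite H1 mul_delta_mx mulmxBl mul1mx mul_delta_mx subrr.
  by rewrite tens0mx addr0.
rewrite H2 // mul_delta_mx_0 1?eq_sym // tens0mx add0r.
by rewrite mulmxBl mul1mx mul_delta_mx_0 1?eq_sym // subr0.
Qed.

Lemma DD : D *m D = D.
Proof. exact: mul_delta_mx. Qed.

Lemma O_unit : O^t* *m O = 1%:M.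
Proof.
have UU : U^t* *m U = 1%:M by apply/mulmx1C/unitarymxP.
have D1 : D *m (1%:M - D) = 0 by rewrite mulmxBr mulmx1 DD subrr.
have D2 : (1%:M - D) *m D = 0 by rewrite mulmxBl mul1mx DD subrr.
have D3 : (1%:M - D) *m (1%:M - D) = 1%:M - D.
  by rewrite mulmxBl mul1mx D1 subr0.
rewrite O_form adjD !adj_tens adjB !adj1 delta_adj.
rewrite mulmxDl !mulmxDr !tensmx_mul UU !mul1mx !mulmx1 DD D1 D2 D3.
by rewrite !tens0mx addr0 add0r -tensmxDl (addrC D) subrK tens11.
Qed.

Lemma O_minus : O - 1%:M = D *t (U - 1%:M).
Proof.
rewrite O_form -(@tens11 _ N M) tensmxBl tensmxBr.
exact: zm1.
Qed.

Lemma P_adj : (D *t (1%:M : 'M[C]_M))^t* = D *t 1%:M.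
Proof. by rewrite adj_tens delta_adj adj1. Qed.

Lemma PP : (D *t (1%:M : 'M[C]_M)) *m (D *t 1%:M) = D *t 1%:M.
Proof. by rewrite tensmx_mul DD mulmx1. Qed.

Lemma P_O : (D *t 1%:M) *m (O - 1%:M) *m (D *t 1%:M) = O - 1%:M.
Proof. by rewrite O_minus !tensmx_mul DD DD mul1mx mulmx1. Qed.

End Oracle.
Set Implicit Arguments. Unset Strict Implicit. Unset Printing Implicit Defensive.

Section RealBound.
Variable R : realType.

Lemma real_bound (p q eta : R) : 0 < eta -> eta < 1 ->
  eta <= p -> p <= 1 - eta -> eta <= q -> q <= 1 - eta ->
  2 * (Num.sqrt p * Num.sqrt (1 - q) - Num.sqrt (1 - p) * Num.sqrt q) ^+ 2
    <= (p - q) ^+ 2 / (eta * (1 - eta)).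
Proof.
move=> e0 e1 p0 p1 q0 q1.
have hp : 0 <= p by lra.
have hq : 0 <= q by lra.
have hp' : 0 <= 1 - p by lra.
have hq' : 0 <= 1 - q by lra.
set u := Num.sqrt p * Num.sqrt (1 - q).
set v := Num.sqrt (1 - p) * Num.sqrt q.
have u0 : 0 <= u by rewrite mulr_ge0 ?sqrtr_ge0.
have v0 : 0 <= v by rewrite mulr_ge0 ?sqrtr_ge0.
have u2 : u ^+ 2 = p * (1 - q) by rewrite /u exprMn !sqr_sqrtr.
have v2 : v ^+ 2 = (1 - p) * q by rewrite /v exprMn !sqr_sqrtr.
have e : (u - v) * (u + v) = p - q.
  have -> : (u - v) * (u + v) = u ^+ 2 - v ^+ 2 by ring.
  by rewrite u2 v2; ring.
have h1 : 2 * (eta * (1 - eta)) <= u ^+ 2 + v ^+ 2.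
  rewrite u2 v2; nra.
have h2 : u ^+ 2 + v ^+ 2 <= (u + v) ^+ 2 by nra.
have ee : 0 < eta * (1 - eta) by apply: mulr_gt0; lra.
rewrite ler_pdivlMr // -e exprMn.
have s0 : 0 <= (u - v) ^+ 2 by apply: sqr_ge0.
have := ler_wpM2l s0 (le_trans h1 h2).
by rewrite mulrCA mulrA.
Qed.

End RealBound.
Set Implicit Arguments. Unset Strict Implicit. Unset Printing Implicit Defensive.

Section Final.
Variable R : realType.
Local Notation C := (R[i]).
Local Open Scope sesquilinear_scope.

Lemma conjR (x : R) : ((x%:C)%C)^* = (x%:C)%C.
Proof. apply: conj_Creal; apply/complex_realP; exists x; reflexivity. Qed.

Lemma RCD (x y : R) : ((x + y)%:C)%C = (x%:C)%C + (y%:C)%C.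
Proof. exact: rmorphD. Qed.
Lemma RCM (x y : R) : ((x * y)%:C)%C = (x%:C)%C * (y%:C)%C.
Proof. exact: rmorphM. Qed.
Lemma RCB (x y : R) : ((x - y)%:C)%C = (x%:C)%C - (y%:C)%C.
Proof. exact: rmorphB. Qed.
Lemma RC1 : ((1 : R)%:C)%C = 1.
Proof. exact: rmorph1. Qed.
Lemma RC0 : ((0 : R)%:C)%C = 0.
Proof. exact: rmorph0. Qed.
Lemma RCX (x : R) k : ((x ^+ k)%:C)%C = (x%:C)%C ^+ k.
Proof. exact: rmorphXn. Qed.
Lemma RCn k : ((k%:R : R)%:C)%C = k%:R.
Proof. exact: rmorph_nat. Qed.
Lemma ac6 (V : zmodType) (a b c d e f : V) :
  a + b + c + (d + e + f) = a + d + (b + e) + (c + f).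
Proof. by rewrite addrACA (addrACA a). Qed.
Lemma comb3 (V : lmodType R[i]) (x1 y1 z1 x2 y2 z2 : R) (S K T : V) :
  ((x1%:C)%C *: S + (y1%:C)%C *: K + (z1%:C)%C *: T) +
  ((x2%:C)%C *: S + (y2%:C)%C *: K + (z2%:C)%C *: T) =
  (((x1 + x2)%:C)%C *: S + ((y1 + y2)%:C)%C *: K + ((z1 + z2)%:C)%C *: T).
Proof. by rewrite !RCD !scalerDl; apply: ac6. Qed.

Lemma gramZ (a : R) m k (A : 'M[C]_(m, k)) :
  ((a%:C)%C *: A) *m ((a%:C)%C *: A)^t* = ((a ^+ 2)%:C)%C *: (A *m A^t*).
Proof. by rewrite adjZ conjR -scalemxAl -scalemxAr scalerA -RCM expr2. Qed.

Lemma gram_row2 m k1 k2 (A1 : 'M[C]_(m, k1)) (A2 : 'M[C]_(m, k2)) :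
  row_mx A1 A2 *m (row_mx A1 A2)^t* = A1 *m A1^t* + A2 *m A2^t*.
Proof. by rewrite adj_row mul_row_col. Qed.

Variable n : nat.
Variable O : 'M[C]_n.
Hypothesis HOa : O^t* = O.
Hypothesis OO : O *m O = 1%:M.

Definition Bm (a b : R) : 'M[C]_n := (a%:C)%C *: 1%:M + (b%:C)%C *: O.

Lemma gramB (a b : R) (S : 'M[C]_n) :
  Bm a b *m S *m (Bm a b)^t* =
  ((a ^+ 2)%:C)%C *: S + ((a * b)%:C)%C *: (S *m O + O *m S) + ((b ^+ 2)%:C)%C *: (O *m S *m O).
Proof.
rewrite /Bm adjD !adjZ !conjR adj1 HOa.
rewrite !mulmxDl !mulmxDr -!scalemxAl -!scalemxAr !mul1mx !mulmx1 !scalerA.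
rewrite -!RCM !expr2 scalerDr (mulrC b a).
by rewrite !addrA.
Qed.

Lemma trB (a b c : R) k (Y : 'M[C]_(n, k)) (W : 'M[C]_(k, n)) :
  \tr (Bm a b *m Y *m ((c%:C)%C *: W)) =
  (c%:C)%C * ((a%:C)%C * \tr (Y *m W) + (b%:C)%C * \tr (O *m Y *m W)).
Proof.
rewrite -scalemxAr mxtraceZ /Bm !mulmxDl -!scalemxAl mul1mx.
by rewrite mxtraceD !mxtraceZ.
Qed.

End Final.

Section TRsec.
Variable R : realType.
Local Notation C := (R[i]).
Local Open Scope sesquilinear_scope.

Lemma TR_lemma n k (O : 'M[C]_n) (X Y : 'M[C]_(n, k)) (a0 a1 al be ga de : R) :
  O^t* = O -> O *m O = 1%:M ->
  \tr ((row_mx ((a0%:C)%C *: X) ((a1%:C)%C *: (O *m X)))^t* *m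
        row_mx (Bm O al be *m Y) (Bm O ga de *m Y)) =
  (a0%:C)%C * ((al%:C)%C * \tr (X^t* *m Y) + (be%:C)%C * \tr (X^t* *m (O *m Y))) +
  (a1%:C)%C * ((ga%:C)%C * \tr (X^t* *m (O *m Y)) + (de%:C)%C * \tr (X^t* *m Y)).
Proof.
move=> HO OO.
have -> : \tr ((row_mx ((a0%:C)%C *: X) ((a1%:C)%C *: (O *m X)))^t* *m
        row_mx (Bm O al be *m Y) (Bm O ga de *m Y)) =
      \tr (Bm O al be *m Y *m ((a0%:C)%C *: X^t*)) +
      \tr (Bm O ga de *m Y *m ((a1%:C)%C *: (X^t* *m O))).
  rewrite mxtrace_mulC adj_row mul_row_col !adjZ !conjR (adjM O X) HO.
  by rewrite mxtraceD.
have e1 : \tr (Bm O al be *m Y *m ((a0%:C)%C *: X^t*)) =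
   (a0%:C)%C * ((al%:C)%C * \tr (Y *m X^t*) + (be%:C)%C * \tr (O *m Y *m X^t*)).
  exact: trB.
have e2 : \tr (Bm O ga de *m Y *m ((a1%:C)%C *: (X^t* *m O))) =
   (a1%:C)%C * ((ga%:C)%C * \tr (Y *m (X^t* *m O)) + (de%:C)%C * \tr (O *m Y *m (X^t* *m O))).
  exact: trB.
apply: (eq_trans (congr2 +%R e1 e2)).
have t1 : \tr (Y *m X^t*) = \tr (X^t* *m Y) by rewrite mxtrace_mulC.
have t2 : \tr (O *m Y *m X^t*) = \tr (X^t* *m (O *m Y)) by rewrite mxtrace_mulC.
have t3 : \tr (Y *m (X^t* *m O)) = \tr (X^t* *m (O *m Y)).
  by rewrite mxtrace_mulC -mulmxA.
have t4 : \tr (O *m Y *m (X^t* *m O)) = \tr (X^t* *m Y).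
  by rewrite mxtrace_mulC mulmxA -(mulmxA (X^t*) O O) OO mulmx1.
by rewrite t1 t2 t3 t4.
Qed.

End TRsec.

Section Final2.
Variable R : realType.
Local Notation C := (R[i]).
Local Open Scope sesquilinear_scope.

Lemma gram_mul m k l (A : 'M[C]_(m, k)) (Y : 'M[C]_(k, l)) :
  (A *m Y) *m (A *m Y)^t* = A *m (Y *m Y^t*) *m A^t*.
Proof. by rewrite adjM !mulmxA. Qed.

Lemma diff_form m k (Pm O : 'M[C]_m) (X Y : 'M[C]_(m, k)) :
  Pm^t* = Pm -> Pm *m (O - 1%:M) *m Pm = O - 1%:M ->
  \tr (X^t* *m (O *m Y)) - \tr (X^t* *m Y) =
  \tr ((Pm *m X)^t* *m (O *m (Pm *m Y))) - \tr ((Pm *m X)^t* *m (Pm *m Y)).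
Proof.
move=> HPa HPO.
have e1 : \tr (X^t* *m (O *m Y)) - \tr (X^t* *m Y) =
          \tr (X^t* *m ((O - 1%:M) *m Y)) by rewrite mulmxBl mul1mx mulmxBr raddfB.
have e2 : \tr ((Pm *m X)^t* *m (O *m (Pm *m Y))) - \tr ((Pm *m X)^t* *m (Pm *m Y)) =
          \tr ((Pm *m X)^t* *m ((O - 1%:M) *m (Pm *m Y))) by rewrite mulmxBl mul1mx mulmxBr raddfB.
rewrite e1 e2 -{1}HPO (adjM Pm X) HPa !mulmxA.
by [].
Qed.

Lemma frobO m k (O : 'M[C]_m) (A : 'M[C]_(m, k)) :
  O^t* *m O = 1%:M -> frob (O *m A) = frob A.
Proof.
move=> OU; rewrite /frob (adjM O A) mulmxA -(mulmxA (A^t*) (O^t*) O) OU mulmx1.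
by [].
Qed.

Lemma frobP m k (Pm : 'M[C]_m) (X : 'M[C]_(m, k)) :
  Pm^t* = Pm -> Pm *m Pm = Pm -> frob (Pm *m X) = \tr (Pm *m (X *m X^t*)).
Proof.
move=> HPa HPP; rewrite /frob (adjM Pm X) HPa (mulmxA (X^t* *m Pm) Pm X).
rewrite -(mulmxA (X^t*) Pm Pm) HPP.
by rewrite [LHS]mxtrace_mulC (mulmxA X) [LHS]mxtrace_mulC.
Qed.

Lemma norm_sqrt (t a b : C) : 0 <= a -> 0 <= b -> `|t| ^+ 2 <= a * b ->
  `|t| <= sqrtC (a * b).
Proof.
move=> a0 b0 h; rewrite -(sqrCK (normr_ge0 t)).
by rewrite ler_sqrtC // ?nnegrE ?exprn_ge0 ?normr_ge0 ?mulr_ge0.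
Qed.

End Final2.

Theorem lemma1 (R : realType) (N M : nat) (i : 'I_N)
  (U : 'M[R[i]]_M) (O : 'M[R[i]]_(N * M)) (eta : R) :
  U \is unitarymx ->
  (forall w : 'cV[R[i]]_M,
      O *m (delta_mx i (0 : 'I_1) *t w) = delta_mx i (0 : 'I_1) *t (U *m w)) ->
  (forall (j : 'I_N) (w : 'cV[R[i]]_M), j != i ->
      O *m (delta_mx j (0 : 'I_1) *t w) = delta_mx j (0 : 'I_1) *t w) ->
  adjmx O = O ->
  0 < eta < 1 ->
  let Fch (p : R) (rho : 'M[R[i]]_(N * M)) :=
      ((1 - p)%:C)%C *: rho + (p%:C)%C *: (O *m rho *m adjmx O) in
  let P : 'M[R[i]]_(N * M) := delta_mx i i *t (1%:M : 'M[R[i]]_M) in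
  forall (rho sigma : 'M[R[i]]_(N * M)) (p q : R),
    density rho -> density sigma ->
    eta <= p <= 1 - eta -> eta <= q <= 1 - eta ->
    root_fid rho sigma
      - ((((p - q) ^+ 2) / (eta * (1 - eta)))%:C)%C
        * sqrtC (\tr (P *m rho) * \tr (P *m sigma))
    <= root_fid (Fch p rho) (Fch q sigma).
Proof.
move=> HU H1 H2 HO /andP[e0 e1] Fch P rho sigma p q [Pr _] [Ps _] /andP[p0 p1] /andP[q0 q1].
rewrite /Fch /P /adjmx; rewrite /adjmx in HO.
clear Fch P.
Local Open Scope sesquilinear_scope.
have OU : O^t* *m O = 1%:M by apply: (O_unit HU H1 H2).
have OO : O *m O = 1%:M by rewrite -{1}HO OU.
set Pm := delta_mx i i *t (1%:M : 'M[R[i]]_M).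
have PA : Pm^t* = Pm by apply: P_adj.
have PP : Pm *m Pm = Pm by apply: PP.
have PO : Pm *m (O - 1%:M) *m Pm = O - 1%:M by apply: (P_O H1 H2).
clearbody Pm.
have [X [Y [XX YY FE]]] := fid_ach Pr Ps.
have hp : 0 <= p by lra.
have hq : 0 <= q by lra.
have hp' : 0 <= 1 - p by lra.
have hq' : 0 <= 1 - q by lra.
set a0 := Num.sqrt (1 - p); set a1 := Num.sqrt p.
set b0 := Num.sqrt (1 - q); set b1 := Num.sqrt q.
have a0s : a0 ^+ 2 = 1 - p by rewrite sqr_sqrtr.
have a1s : a1 ^+ 2 = p by rewrite sqr_sqrtr.
have b0s : b0 ^+ 2 = 1 - q by rewrite sqr_sqrtr.
have b1s : b1 ^+ 2 = q by rewrite sqr_sqrtr.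
have RB := real_bound e0 e1 p0 p1 q0 q1.
rewrite -/a0 -/a1 -/b0 -/b1 in RB.
set c := a0 * b0 + a1 * b1; set s := a1 * b0 - a0 * b1.
have cs : c ^+ 2 + s ^+ 2 = 1.
  have -> : c ^+ 2 + s ^+ 2 = (a0 ^+ 2 + a1 ^+ 2) * (b0 ^+ 2 + b1 ^+ 2) by rewrite /c /s; ring.
  by rewrite a0s a1s b0s b1s; ring.
have cE : c = a0 * b0 + a1 * b1 by [].
have sE : s = a1 * b0 - a0 * b1 by [].
clearbody c s.
pose X' := row_mx ((a0%:C)%C *: X) ((a1%:C)%C *: (O *m X)).
pose Y' := row_mx (Bm O (c * b0) (- (s * b1)) *m Y) (Bm O (s * b0) (c * b1) *m Y).
have XX' : X' *m X'^t* = ((1 - p)%:C)%C *: rho + (p%:C)%C *: (O *m rho *m O^t*).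
  rewrite /X' gram_row2 !gramZ a0s a1s XX.
  by rewrite (adjM O X) (mulmxA (O *m X)) -(mulmxA O X (X^t*)) XX.
have YY' : Y' *m Y'^t* = ((1 - q)%:C)%C *: sigma + (q%:C)%C *: (O *m sigma *m O^t*).
  rewrite /Y' gram_row2 !gram_mul YY !(gramB HO) comb3 HO.
  have r1 : (c * b0) ^+ 2 + (s * b0) ^+ 2 = 1 - q.
    have -> : (c * b0) ^+ 2 + (s * b0) ^+ 2 = (c ^+ 2 + s ^+ 2) * b0 ^+ 2 by ring.
    by rewrite cs mul1r b0s.
  have r2 : c * b0 * - (s * b1) + s * b0 * (c * b1) = 0 by ring.
  have r3 : (- (s * b1)) ^+ 2 + (c * b1) ^+ 2 = q.
    have -> : (- (s * b1)) ^+ 2 + (c * b1) ^+ 2 = (c ^+ 2 + s ^+ 2) * b1 ^+ 2 by ring.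
    by rewrite cs mul1r b1s.
  by rewrite r1 r2 r3 RC0 scale0r addr0.
have TR : \tr (X'^t* *m Y') =
    \tr (X^t* *m Y) + ((s ^+ 2)%:C)%C * (\tr (X^t* *m (O *m Y)) - \tr (X^t* *m Y)).
  apply: (eq_trans (@TR_lemma R _ _ O X Y a0 a1 (c * b0) (- (s * b1)) (s * b0) (c * b1) HO OO)).
  move: (\tr (X^t* *m Y)) (\tr (X^t* *m (O *m Y))) => F G.
  have r1 : a0 * (c * b0) + a1 * (c * b1) = 1 - s ^+ 2.
    have -> : a0 * (c * b0) + a1 * (c * b1) = c * (a0 * b0 + a1 * b1) by ring.
    by rewrite -cE -cs; ring.
  have r2 : a0 * (- (s * b1)) + a1 * (s * b0) = s ^+ 2.
    have -> : a0 * (- (s * b1)) + a1 * (s * b0) = s * (a1 * b0 - a0 * b1) by ring.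
    by rewrite -sE expr2.
  have -> : (a0%:C)%C * (((c * b0)%:C)%C * F + ((- (s * b1))%:C)%C * G) +
            (a1%:C)%C * (((s * b0)%:C)%C * G + ((c * b1)%:C)%C * F) =
            ((a0 * (c * b0) + a1 * (c * b1))%:C)%C * F +
            ((a0 * (- (s * b1)) + a1 * (s * b0))%:C)%C * G.
    by rewrite !RCD !RCM; ring.
  by rewrite r1 r2 RCB RC1; ring.
have UB := fid_ub X' Y'.
rewrite TR XX' YY' in UB.
have F0 : 0 <= \tr (X^t* *m Y).
  have := fid_ub X Y; rewrite XX YY -FE => h.
  exact: le_trans (normr_ge0 _) h.
have Ea : \tr (Pm *m rho) = frob (Pm *m X) by rewrite -XX frobP.
have Eb : \tr (Pm *m sigma) = frob (Pm *m Y) by rewrite -YY frobP.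
have EB : `|\tr (X^t* *m (O *m Y)) - \tr (X^t* *m Y)| <=
          sqrtC (frob (Pm *m X) * frob (Pm *m Y)) + sqrtC (frob (Pm *m X) * frob (Pm *m Y)).
  rewrite (@diff_form R _ _ Pm O X Y PA PO).
  apply: le_trans (ler_normB _ _) _.
  apply: lerD; apply: norm_sqrt; rewrite ?frob_ge0 //.
    by rewrite -(@frobO R _ _ O (Pm *m Y) OU); apply: frobCS.
  exact: frobCS.
rewrite -FE Ea Eb.
apply: le_trans UB.
move: EB F0; move: (\tr (X^t* *m Y)) (\tr (X^t* *m (O *m Y))) => F G EB F0.
move: (sqrtC (frob (Pm *m X) * frob (Pm *m Y))) (sqrtC_ge0 (frob (Pm *m X) * frob (Pm *m Y))) EB.
move=> sq sq0' EB.
have sq0 : 0 <= sq.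
  by rewrite sq0' mulr_ge0 ?frob_ge0.
have ss0 : 0 <= ((s ^+ 2)%:C)%C :> R[i] by rewrite ler0c sqr_ge0.
have L1 := lerB_normD F (((s ^+ 2)%:C)%C * (G - F)).
rewrite (ger0_norm F0) normrM (ger0_norm ss0) in L1.
apply: le_trans L1.
rewrite lerD2l lerN2.
apply: le_trans (ler_wpM2l ss0 EB) _.
have -> : ((s ^+ 2)%:C)%C * (sq + sq) = ((s ^+ 2 + s ^+ 2)%:C)%C * sq.
  by rewrite RCD; ring.
apply: ler_wpM2r => //.
rewrite lecR; rewrite -sE in RB; lra.
Qed.
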